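(* Let $K\subset\mathbb{C}^2$ be a bombon such that the (complex) ellipsoid of minimal volume containing $K$ is the closed unit ball $B$ of $\mathbb{C}^2$. Then $K\cap\mathbb{S}^3$ is a linearly closed subset of the abstract linear space $LS^3$.
   Context: A convex body is a compact convex subset of $\mathbb{C}^n$ with nonempty interior. A (complex) ellipsoid is the image of the closed Euclidean unit ball under an invertible complex affine map. A bombon is a convex body $K\subset\mathbb{C}^n$ such that for every complex affine line $L$, $L\cap K$ is empty, a single point, or a closed round disk in $L$. $\mathbb{S}^3=\partial B$ is the unit sphere of $\mathbb{C}^2$. The abstract linear space $LS^3$ has point set $\mathbb{S}^3$ and abstract lines the sets $L\cap\mathbb{S}^3$ where $L$ is a complex affine line of $\mathbb{C}^2$ meeting $\mathbb{S}^3$ in more than one point (i.e. non-tangential; such $L\cap\mathbb{S}^3$ is a round circle); any two distinct points of $\mathbb{S}^3$ lie on exactly one abstract line. A subset $A\subset\mathbb{S}^3$ is linearly closed if for any two distinct $x,y\in A$ the abstract line through $x$ and $y$ is contained in $A$. *)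

(* Defs.v *)
(* C^2 is modelled concretely as
   ((R * R) * (R * R)) : a point (z1, z2) with z_k = (Re z_k, Im z_k). *)
From HB Require Import structures.
From mathcomp Require Import all_boot all_order all_algebra.
From mathcomp Require Import all_classical all_reals all_analysis.
Set Implicit Arguments. Unset Strict Implicit. Unset Printing Implicit Defensive.
Import Order.TTheory GRing.Theory Num.Theory.
Import numFieldNormedType.Exports.
Local Open Scope classical_set_scope.
Local Open Scope ring_scope.

Notation cplx R := (R * R)%type.
Notation C2 R := ((R * R) * (R * R))%type.

Section Defs.
Variable R : realType.
Local Notation cplx := (cplx R).
Local Notation C2 := (C2 R).

Definition cadd (a b : cplx) : cplx := (a.1 + b.1, a.2 + b.2).
Definition cmul (a b : cplx) : cplx := (a.1 * b.1 - a.2 * b.2, a.1 * b.2 + a.2 * b.1).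

Definition padd (x y : C2) : C2 := (cadd x.1 y.1, cadd x.2 y.2).
Definition psub (x y : C2) : C2 :=
  ((x.1.1 - y.1.1, x.1.2 - y.1.2), (x.2.1 - y.2.1, x.2.2 - y.2.2)).
Definition pscale (t : cplx) (x : C2) : C2 := (cmul t x.1, cmul t x.2).
Definition pzero : C2 := ((0, 0), (0, 0)).

Definition norm2 (x : C2) : R :=
  x.1.1 ^+ 2 + x.1.2 ^+ 2 + x.2.1 ^+ 2 + x.2.2 ^+ 2.

Definition ball1 : set C2 := [set x | norm2 x <= 1].
Definition sphere3 : set C2 := [set x | norm2 x = 1].

(* convex body: compact convex subset with nonempty interior
   (topology = product topology on (R*R)*(R*R), i.e. the Euclidean one) *)
Definition convex_set (K : set C2) : Prop :=
  forall x y (t : R), K x -> K y -> 0 <= t <= 1 ->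
    K (((1 - t) * x.1.1 + t * y.1.1, (1 - t) * x.1.2 + t * y.1.2),
       ((1 - t) * x.2.1 + t * y.2.1, (1 - t) * x.2.2 + t * y.2.2)).
Definition convex_body (K : set C2) : Prop :=
  compact K /\ convex_set K /\ (interior K !=set0).

Definition cline (p v : C2) : set C2 :=
  [set x | exists t : cplx, x = padd p (pscale t v)].
Definition complex_line (L : set C2) : Prop :=
  exists p v, v <> pzero /\ L = cline p v.

Definition round_disk_in (L D : set C2) : Prop :=
  exists c r, L c /\ 0 < r /\ D = [set x | L x /\ norm2 (psub x c) <= r ^+ 2].

Definition bombon (K : set C2) : Prop :=
  convex_body K /\
  forall L, complex_line L ->
    (L `&` K = set0) \/ (exists a, L `&` K = [set a]) \/ round_disk_in L (L `&` K).

Definition caffine (a11 a12 a21 a22 : cplx) (b : C2) (x : C2) : C2 :=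
  (cadd (cadd (cmul a11 x.1) (cmul a12 x.2)) b.1,
   cadd (cadd (cmul a21 x.1) (cmul a22 x.2)) b.2).

Definition ellipsoid (E : set C2) : Prop :=
  exists a11 a12 a21 a22 b,
    bijective (caffine a11 a12 a21 a22 b) /\
    E = caffine a11 a12 a21 a22 b @` ball1.

Definition vol (S : set C2) : \bar R :=
  (((@lebesgue_measure R) \x (@lebesgue_measure R)) \x
   ((@lebesgue_measure R) \x (@lebesgue_measure R)))%E S.

Definition min_vol_ellipsoid (K E0 : set C2) : Prop :=
  ellipsoid E0 /\ K `<=` E0 /\
  (forall E, ellipsoid E -> K `<=` E -> (vol E0 <= vol E)%E) /\
  (forall E, ellipsoid E -> K `<=` E -> (vol E <= vol E0)%E -> E = E0).

(* linear closedness in the abstract linear space LS^3: the abstract line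
   through distinct x, y in S^3 is cline x (y - x) `&` S^3 *)
Definition linearly_closed (A : set C2) : Prop :=
  A `<=` sphere3 /\
  forall x y, A x -> A y -> x <> y -> cline x (psub y x) `&` sphere3 `<=` A.

End Defs.

(* Main.v *)
Require Import Defs.
From mathcomp Require Import all_boot all_order all_algebra.
From mathcomp Require Import all_classical all_reals all_analysis.
From mathcomp Require Import ring lra.
Set Implicit Arguments. Unset Strict Implicit.
Import Order.TTheory GRing.Theory Num.Theory.
Local Open Scope classical_set_scope.
Local Open Scope ring_scope.
Lemma sos0 (R : realDomainType) (x y : R) : x ^+ 2 + y ^+ 2 <= 0 -> x = 0 /\ y = 0.
Proof.
move=> H.
have hx := sqr_ge0 x; have hy := sqr_ge0 y.
have ex : x ^+ 2 = 0 by apply/eqP; rewrite eq_le hx andbT; apply: le_trans H; rewrite lerDl.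
have ey : y ^+ 2 = 0 by apply/eqP; rewrite eq_le hy andbT; apply: le_trans H; rewrite lerDr.
by split; apply/eqP; rewrite -sqrf_eq0; apply/eqP.
Qed.

Lemma disk2 (R : rcfType) (g h u v rho R0 p1 p2 q1 q2 : R) :
  (forall a b, (a-u)^+2+(b-v)^+2 <= rho -> (a-g)^+2+(b-h)^+2 <= R0) ->
  (p1-u)^+2+(p2-v)^+2 <= rho -> (p1-g)^+2+(p2-h)^+2 = R0 ->
  (q1-u)^+2+(q2-v)^+2 <= rho -> (q1-g)^+2+(q2-h)^+2 = R0 ->
  (p1, p2) <> (q1, q2) ->
  forall a b, (a-g)^+2+(b-h)^+2 = R0 -> (a-u)^+2+(b-v)^+2 <= rho.
Proof.
move=> H HP1 HP2 HQ1 HQ2 Hne a b Hab.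
have [d1 Ed1] : exists d1, u = g + d1 by exists (u - g); ring.
have [d2 Ed2] : exists d2, v = h + d2 by exists (v - h); ring.
subst u v.
have [D0|Dpos] := eqVneq (d1^+2 + d2^+2) 0.
  have [e1 e2] : d1 = 0 /\ d2 = 0 by apply: (@sos0 R); rewrite D0.
  rewrite e1 e2 !addr0 in HP1 *; lra.
exfalso.
have Dgt : 0 < d1^+2 + d2^+2 by rewrite lt0r Dpos /= addr_ge0 ?sqr_ge0.
have rho0 : 0 <= rho by apply: le_trans HP1; rewrite addr_ge0 ?sqr_ge0.
have [n [n2 ngt]] : exists n : R, n ^+ 2 = d1^+2 + d2^+2 /\ 0 < n.
  by exists (Num.sqrt (d1^+2 + d2^+2)); rewrite sqr_sqrtr ?sqrtr_gt0 // ltW.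
have [r [r2 rge]] : exists r : R, r ^+ 2 = rho /\ 0 <= r.
  by exists (Num.sqrt rho); rewrite sqr_sqrtr ?sqrtr_ge0.
have [t tn] : exists t, t * n = r by exists (r / n); rewrite mulfVK // gt_eqF.
have key : (n + r) ^+ 2 <= R0.
  have Ht := H (g + d1 + t * d1) (h + d2 + t * d2).
  have E1 : (g + d1 + t * d1 - (g + d1))^+2 + (h + d2 + t * d2 - (h + d2))^+2
      = t^+2 * (d1^+2 + d2^+2) by ring.
  have E2 : (g + d1 + t * d1 - g)^+2 + (h + d2 + t * d2 - h)^+2
      = (1 + t)^+2 * (d1^+2 + d2^+2) by ring.
  rewrite E1 E2 -n2 in Ht.
  have E3 : (n + r) ^+ 2 = (1 + t)^+2 * n^+2 by rewrite -tn; ring.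
  have E4 : t^+2 * n^+2 = rho by rewrite -r2 -tn; ring.
  rewrite E3; apply: Ht; rewrite E4 lexx //.
have align : forall x1 x2, (x1-(g+d1))^+2+(x2-(h+d2))^+2 <= rho -> (x1-g)^+2+(x2-h)^+2 = R0 ->
   r * d1 = n * (x1 - (g+d1)) /\ r * d2 = n * (x2 - (h+d2)).
  move=> x1 x2 X1 X2.
  have [e1 Ee1] : exists e1, x1 = g + d1 + e1 by exists (x1 - (g + d1)); ring.
  have [e2 Ee2] : exists e2, x2 = h + d2 + e2 by exists (x2 - (h + d2)); ring.
  subst x1 x2.
  have F1 : (g + d1 + e1 - (g + d1))^+2 + (h + d2 + e2 - (h + d2))^+2 = e1^+2 + e2^+2 by ring.
  have F2 : (g + d1 + e1 - g)^+2 + (h + d2 + e2 - h)^+2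
     = n^+2 + 2 * (d1 * e1 + d2 * e2) + (e1^+2 + e2^+2) by rewrite n2; ring.
  have F3 : g + d1 + e1 - (g + d1) = e1 by ring.
  have F4 : h + d2 + e2 - (h + d2) = e2 by ring.
  rewrite F1 in X1; rewrite F2 in X2; rewrite F3 F4.
  have ip : n * r <= d1 * e1 + d2 * e2.
    have X4 : (n + r)^+2 = n^+2 + 2 * (n * r) + r^+2 by ring.
    rewrite r2 in X4; lra.
  have sq : (r * d1 - n * e1)^+2 + (r * d2 - n * e2)^+2 <= 0.
    have -> : (r * d1 - n * e1)^+2 + (r * d2 - n * e2)^+2 =
       r^+2 * (d1^+2 + d2^+2) - 2 * (r * n) * (d1 * e1 + d2 * e2) + n^+2 * (e1^+2 + e2^+2) by ring.
    rewrite -n2.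
    have nr0 : 0 <= r * n by rewrite mulr_ge0 // ltW.
    have h1 : (r * n) * (n * r) <= (r * n) * (d1 * e1 + d2 * e2) by rewrite ler_wpM2l.
    have h2 : n ^+ 2 * (e1 ^+ 2 + e2 ^+ 2) <= n ^+ 2 * r ^+ 2 by rewrite ler_wpM2l ?sqr_ge0 // r2.
    have h3 : r ^+ 2 * n ^+ 2 - 2 * ((r * n) * (n * r)) + n ^+ 2 * r ^+ 2 = 0 by ring.
    lra.
  have [s1 s2] := @sos0 _ _ _ sq.
  split; apply/eqP; rewrite -subr_eq0; apply/eqP; [exact: s1|exact: s2].
have [A1 A2] := align p1 p2 HP1 HP2.
have [B1 B2] := align q1 q2 HQ1 HQ2.
apply: Hne.
have e1 : p1 = q1.
  have : n * (p1 - (g+d1)) = n * (q1 - (g+d1)) by rewrite -A1 -B1.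
  move/(mulfI (lt0r_neq0 ngt)) => ?; lra.
have e2 : p2 = q2.
  have : n * (p2 - (h+d2)) = n * (q2 - (h+d2)) by rewrite -A2 -B2.
  move/(mulfI (lt0r_neq0 ngt)) => ?; lra.
by rewrite e1 e2.
Qed.

Lemma disk2w (R : rcfType) (W al be u v r2 : R) : 0 < W ->
 (forall a b, W*((a-u)^+2+(b-v)^+2) <= r2 -> W*(a^+2+b^+2) + 2*(a*al+b*be) <= 0) ->
 W*(u^+2+v^+2) <= r2 -> W*((1-u)^+2+v^+2) <= r2 -> W + 2*al = 0 ->
 forall a b, W*(a^+2+b^+2) + 2*(a*al+b*be) = 0 -> W*((a-u)^+2+(b-v)^+2) <= r2.
Proof.
move=> W0 H P Q E a b Hab.
have Wn : W != 0 by rewrite gt_eqF.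
set g := - al / W; set h := - be / W; set R0 := (al^+2 + be^+2) / W^+2.
have id1 : forall a b, W * ((a - g)^+2 + (b - h)^+2 - R0) = W*(a^+2+b^+2) + 2*(a*al+b*be).
  by move=> a' b'; rewrite /g /h /R0; field.
have id2 : forall X, (W * X <= r2) = (X <= r2 / W).
  by move=> X; rewrite ler_pdivlMr // mulrC.
have sub0 : forall X Y, (W * (X - Y) <= 0) = (X <= Y).
  by move=> X Y; rewrite pmulr_rle0 // subr_le0.
have sub0e : forall X Y, (W * (X - Y) = 0) -> X = Y.
  by move=> X Y /eqP; rewrite mulf_eq0 (negbTE Wn) subr_eq0 => /eqP.
rewrite id2; apply: (@disk2 R g h u v (r2 / W) R0 0 0 1 0).
- move=> a' b'; rewrite -id2 => /H; rewrite -id1 sub0 //.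
- by rewrite -id2 !sub0r !sqrrN.
- apply: sub0e; rewrite id1; ring.
- by rewrite -id2 sub0r sqrrN.
- apply: sub0e; rewrite id1; apply: etrans E; ring.
- by case=> /eqP; rewrite eq_sym oner_eq0.
- by apply: sub0e; rewrite id1.
Qed.

Section Main.
Variable R : realType.

Definition ipr (x w : C2 R) : R := x.1.1 * w.1.1 + x.1.2 * w.1.2 + x.2.1 * w.2.1 + x.2.2 * w.2.2.
Definition ipJ (x w : C2 R) : R := - x.1.1 * w.1.2 + x.1.2 * w.1.1 - x.2.1 * w.2.2 + x.2.2 * w.2.1.

Lemma norm2_phi (x w : C2 R) (t : R * R) :
  norm2 (padd x (pscale t w)) =
  norm2 x + 2 * (t.1 * ipr x w + t.2 * ipJ x w) + (t.1 ^+ 2 + t.2 ^+ 2) * norm2 w.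
Proof.
move: x w t => [[x1 x2] [x3 x4]] [[w1 w2] [w3 w4]] [a b].
rewrite /norm2 /padd /pscale /cadd /cmul /ipr /ipJ /=; ring.
Qed.

Lemma norm2_diff (x w : C2 R) (s t : R * R) :
  norm2 (psub (padd x (pscale s w)) (padd x (pscale t w))) =
  ((s.1 - t.1) ^+ 2 + (s.2 - t.2) ^+ 2) * norm2 w.
Proof.
move: x w s t => [[x1 x2] [x3 x4]] [[w1 w2] [w3 w4]] [a b] [c d].
rewrite /norm2 /psub /padd /pscale /cadd /cmul /=; ring.
Qed.

Lemma phi0 (x w : C2 R) : padd x (pscale (0, 0) w) = x.
Proof.
move: x w => [[x1 x2] [x3 x4]] [[w1 w2] [w3 w4]].
rewrite /padd /pscale /cadd /cmul /=; congr (_, _); congr (_, _) => /=; ring.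
Qed.

Lemma phi1 (x y : C2 R) : padd x (pscale (1, 0) (psub y x)) = y.
Proof.
move: x y => [[x1 x2] [x3 x4]] [[w1 w2] [w3 w4]].
rewrite /padd /pscale /psub /cadd /cmul /=; congr (_, _); congr (_, _) => /=; ring.
Qed.

Lemma norm2_ge0 (x : C2 R) : 0 <= norm2 x.
Proof. by rewrite /norm2 !addr_ge0 ?sqr_ge0. Qed.

Lemma norm2_eq0 (x y : C2 R) : norm2 (psub y x) = 0 -> y = x.
Proof.
move: x y => [[x1 x2] [x3 x4]] [[w1 w2] [w3 w4]].
rewrite /norm2 /psub /= => H.
have h1 : 0 <= (w1 - x1) ^+ 2 + (w2 - x2) ^+ 2 by rewrite addr_ge0 ?sqr_ge0.
have h2 := sqr_ge0 (w3 - x3); have h3 := sqr_ge0 (w4 - x4).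
have [a1 a2] : w1 - x1 = 0 /\ w2 - x2 = 0 by apply: (@sos0 R); lra.
have [a3 a4] : w3 - x3 = 0 /\ w4 - x4 = 0 by apply: (@sos0 R); lra.
congr (_, _); congr (_, _) => /=; lra.
Qed.

End Main.

Theorem lemma3p2 (R : realType) (K : set (C2 R)) :
  bombon K -> min_vol_ellipsoid K (@ball1 R) ->
  linearly_closed (K `&` @sphere3 R).
Proof.
move=> [_ Hline] [_ [KB _]].
split; first by move=> z [].
move=> x y [Kx Sx] [Ky Sy] xy z [Lz Sz].
split; last exact: Sz.
set w := psub y x in Lz *.
have Wpos : 0 < norm2 w.
  rewrite lt0r norm2_ge0 andbT; apply/eqP => /norm2_eq0; exact: nesym xy.
have wne : w <> pzero R.
  by move=> e; move: Wpos; rewrite e /norm2 /= expr0n /= !addr0 ltxx.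
have cl : complex_line (cline x w) by exists x, w.
have Lx : cline x w x by exists (0, 0); rewrite phi0.
have Ly : cline x w y by exists (1, 0); rewrite phi1.
case: (Hline _ cl) => [H0 | [[a Ha] | [c [r [Lc [r0 HD]]]]]].
- have : (cline x w `&` K) x by split.
  by rewrite H0.
- have : (cline x w `&` K) x by split.
  have : (cline x w `&` K) y by split.
  rewrite Ha => ey ex; exfalso; apply: xy; by rewrite ex ey.
have inD : forall t, norm2 (psub (padd x (pscale t w)) c) <= r ^+ 2 -> K (padd x (pscale t w)).
  move=> t Ht.
  have : (cline x w `&` K) (padd x (pscale t w)) by rewrite HD; split => //; exists t.
  by case.
have Dx : forall p, K p -> cline x w p -> norm2 (psub p c) <= r ^+ 2.
  move=> p Kp Lp.
  have : (cline x w `&` K) p by split.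
  by rewrite HD => -[].
case: Lc => tc Ec.
case: Lz => tz Ez.
have Sx1 : norm2 x = 1 by exact: Sx.
have E : norm2 w + 2 * ipr x w = 0.
  have := Sy; rewrite /sphere3 /= -(phi1 x y) -/w norm2_phi Sx1 /=.
  move=> e; lra.
have Hm := @disk2w R (norm2 w) (ipr x w) (ipJ x w) tc.1 tc.2 (r ^+ 2) Wpos.
have key : forall t, norm2 (psub (padd x (pscale t w)) c) = norm2 w * ((t.1 - tc.1) ^+ 2 + (t.2 - tc.2) ^+ 2).
  by move=> t; rewrite Ec norm2_diff mulrC.
rewrite Ez; apply: (inD); rewrite key; apply: Hm.
- move=> a b Hab.
  have := KB _ (inD (a, b) _).
  rewrite key /= => /(_ Hab); rewrite /ball1 /= norm2_phi Sx1 /= => h; lra.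
- have := Dx x Kx Lx; rewrite -{1}(phi0 x w) key /= !sub0r !sqrrN //.
- have := Dx y Ky Ly; rewrite -{1}(phi1 x y) -/w key /= sub0r sqrrN //.
- exact: E.
- have := Sz; rewrite /sphere3 /= Ez norm2_phi Sx1 => e; lra.
Qed.
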